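(* Let $D=\mathrm{diag}(d_1,\dots,d_n)\in\mathbb{D}^n_+$, $W\in\mathbb{R}^{n\times n}$, $u\in\mathbb{R}^n$, $A:=W-D$ with rows $A_i^\top$, and $\mathcal X=\{x\in\mathbb{R}^n: Dx\in[0,1]^n\}$. For $\tau>0$ let $F_\tau(x)=-Dx+[Dx+\tau(Ax+u)]_0^1$, and define $F_\infty:\mathcal X\to\mathbb{R}^n$ componentwise by $$(F_\infty(x))_i=\begin{cases}-d_ix_i, & A_i^\top x+u_i<0,\\ 0, & A_i^\top x+u_i=0,\\ 1-d_ix_i, & A_i^\top x+u_i>0.\end{cases}$$ Then: (i) for each $x\in\mathcal X$, $\lim_{\tau\to+\infty}F_\tau(x)=F_\infty(x)$; (ii) if $\det A\neq0$, then the Filippov regularization of $F_\infty$ satisfies $\operatorname{F}[F_\infty](x)=-Dx+\mathcal H(Ax+u)$ for every $x\in\mathcal X$.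
   Context: $\mathbb{D}^n_+$ is the set of positive diagonal matrices; $[z]_0^1=\max(0,\min(z,1))$ elementwise. The map $h:\mathbb{R}\to 2^{[0,1]}$ is $h(z)=\{0\}$ if $z<0$, $[0,1]$ if $z=0$, $\{1\}$ if $z>0$, and $\mathcal H(x)=h(x_1)\times\cdots\times h(x_n)\subseteq[0,1]^n$. The Filippov regularization of a vector field $X$ is $\operatorname{F}[X](x)=\bigcap_{\delta>0}\bigcap_{\mu(S)=0}\overline{\mathrm{co}}\{X(B(x,\delta)\setminus S)\}$, where $\mu$ is Lebesgue measure, $B(x,\delta)$ the open ball, and $\overline{\mathrm{co}}$ the closed convex hull. *)

(* Defs.v *)
From HB Require Import structures.
From mathcomp Require Import all_boot all_order all_algebra.
From mathcomp Require Import all_classical all_reals all_analysis.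
Set Implicit Arguments. Unset Strict Implicit. Unset Printing Implicit Defensive.
Import Order.TTheory GRing.Theory Num.Theory.
Import numFieldNormedType.Exports.
Local Open Scope classical_set_scope.
Local Open Scope ring_scope.

Section Defs.
Variables (R : realType) (n : nat).

Definition eball (x : 'cV[R]_n) (delta : R) : set 'cV[R]_n :=
  [set y | \sum_(i < n) (y i 0 - x i 0) ^+ 2 < delta ^+ 2].

Definition cbox (a b : 'cV[R]_n) : set 'cV[R]_n :=
  [set y | forall i, a i 0 <= y i 0 <= b i 0].

Definition lebesgue_null (S : set 'cV[R]_n) : Prop :=
  forall eps : R, 0 < eps ->
    exists a b : nat -> 'cV[R]_n,
      (forall k i, a k i 0 <= b k i 0) /\
      (S `<=` \bigcup_k cbox (a k) (b k)) /\
      (forall N, \sum_(k < N) \prod_(i < n) (b k i 0 - a k i 0) <= eps).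

Definition conv_hull (S : set 'cV[R]_n) : set 'cV[R]_n :=
  [set z | exists (k : nat) (w : 'I_k -> R) (p : 'I_k -> 'cV[R]_n),
     (forall j, 0 <= w j) /\ \sum_(j < k) w j = 1 /\
     (forall j, S (p j)) /\ z = \sum_(j < k) w j *: p j].

Definition cl_conv_hull (S : set 'cV[R]_n) : set 'cV[R]_n :=
  closure (conv_hull S).

Definition filippov (X : 'cV[R]_n -> 'cV[R]_n) (x : 'cV[R]_n) : set 'cV[R]_n :=
  [set z | forall delta : R, 0 < delta ->
     forall S : set 'cV[R]_n, lebesgue_null S ->
       cl_conv_hull (X @` (eball x delta `\` S)) z].

Definition clamp01 (v : 'cV[R]_n) : 'cV[R]_n :=
  map_mx (fun z => Num.max 0 (Num.min z 1)) v.

Definition hset (z : R) : set R :=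
  [set t | (z < 0 -> t = 0) /\ (z = 0 -> 0 <= t <= 1) /\ (0 < z -> t = 1)].

Definition Hset (x : 'cV[R]_n) : set 'cV[R]_n :=
  [set y | forall i, hset (x i 0) (y i 0)].

Definition Dmat (d : 'I_n -> R) : 'M[R]_n := diag_mx (\row_i d i).

Definition Xdom (d : 'I_n -> R) : set 'cV[R]_n :=
  [set x | forall i, 0 <= (Dmat d *m x) i 0 <= 1].

Definition Ftau (d : 'I_n -> R) (A : 'M[R]_n) (u : 'cV[R]_n) (tau : R)
  (x : 'cV[R]_n) : 'cV[R]_n :=
  - (Dmat d *m x) + clamp01 (Dmat d *m x + tau *: (A *m x + u)).

(* F_infinity, given by its componentwise formula (on all of R^n) *)
Definition Finf (d : 'I_n -> R) (A : 'M[R]_n) (u : 'cV[R]_n)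
  (x : 'cV[R]_n) : 'cV[R]_n :=
  \col_i (let s := (A *m x + u) i 0 in
          if s < 0 then - (d i * x i 0)
          else if s == 0 then 0 else 1 - d i * x i 0).

End Defs.

(* Main.v *)
Require Import Defs.
From HB Require Import structures.
From mathcomp Require Import all_boot all_order all_algebra.
From mathcomp Require Import all_classical all_reals all_analysis.
From mathcomp Require Import ring lra.
Import Order.TTheory GRing.Theory Num.Theory.
Import numFieldNormedType.Exports.
Local Open Scope classical_set_scope.
Local Open Scope ring_scope.
Lemma count1 (R : realType) K (a b : R) : a <= b + 1 ->
  \sum_(m < K) ((a <= m%:R) && (m%:R <= b))%:R <= b - a + 1.
Proof.
move=> ab.
suff : \sum_(m < K) ((a <= m%:R) && (m%:R <= b))%:R <= Num.max 0 (K%:R - a) /\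
       \sum_(m < K) ((a <= m%:R) && (m%:R <= b))%:R <= b - a + 1 by case.
elim: K => [|K [IH1 IH2]].
  rewrite big_ord0; split; first by rewrite le_max lexx.
  lra.
rewrite big_ord_recr /=.
have [/andP[aK Kb]|nK] := boolP ((a <= K%:R) && (K%:R <= b)).
  have -> : (true%:R : R) = 1 by [].
  have e : Num.max 0 (K%:R - a) = K%:R - a by apply/max_idPr; lra.
  rewrite e in IH1. rewrite -natr1. split; last lra.
  rewrite le_max; apply/orP; right. lra.
have -> : (false%:R : R) = 0 by [].
rewrite addr0; split => //. apply: le_trans IH1 _. rewrite ge_max le_max lexx /=.
rewrite le_max -natr1. apply/orP; right. lra.
Qed.
Lemma prod_lin (R : realType) m (L : nat -> R) r : (forall i, 0 <= L i) -> 0 <= r <= 1 ->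
  \prod_(i < m) (L i + r) <= \prod_(i < m) L i + r * (m%:R * \prod_(i < m) (L i + 1)).
Proof.
move=> L0 /andP[r0 r1].
elim: m => [|m IH]; first by rewrite !big_ord0 mul0r mulr0 addr0.
rewrite !big_ord_recr /=.
set P := \prod_(i < m) L i. set Pr := \prod_(i < m) (L i + r). set P1 := \prod_(i < m) (L i + 1).
have P0 : 0 <= P by apply: prodr_ge0 => i _.
have P1ge : P <= P1 by apply: ler_prod => i _; rewrite L0 /=; lra.
have Pr0 : 0 <= Pr by apply: prodr_ge0 => i _; have := L0 i; lra.
have Li := L0 m.
have H1 : Pr * (L m + r) <= (P + r * (m%:R * P1)) * (L m + r).
  by apply: ler_wpM2r => //; lra.
apply: le_trans H1 _.
have m0 : 0 <= m%:R :> R by [].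
have P10 : 0 <= P1 by lra.
rewrite -natr1.
have : r * (m%:R * P1) * r <= r * (m%:R * P1) * 1.
  apply: ler_wpM2l => //. by apply: mulr_ge0 => //; apply: mulr_ge0.
have : P * r <= P1 * r by apply: ler_wpM2r.
have : 0 <= r * P1 * L m by apply: mulr_ge0 => //; apply: mulr_ge0.
nra.
Qed.
Lemma geo (R : realType) N : \sum_(k < N) ((2:R)^-1) ^+ k.+1 = 1 - (2^-1) ^+ N.
Proof.
elim: N => [|N IH]; first by rewrite big_ord0 expr0 subrr.
rewrite big_ord_recr /= IH exprS. 
have h : 0 <= (2:R)^-1 ^+ N by apply: exprn_ge0.
by field.
Qed.
Lemma b01 (R : realType) (b : bool) : 0 <= (b%:R : R) <= 1.
Proof. by case: b => /=; rewrite ?lexx ?ler01. Qed.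
Lemma lattice (R: realType) n (p : 'cV[R]_n) (q t N : nat) (lo hi : nat -> 'cV[R]_n) :
 (0 < q)%N -> (0 < t)%N ->
 (forall k i, lo k i 0 <= hi k i 0) ->
 (forall y : 'cV[R]_n, (forall i, p i 0 <= y i 0 <= p i 0 + q%:R^-1) ->
    exists2 k, (k < N)%N & forall i, lo k i 0 <= y i 0 <= hi k i 0) ->
 (q%:R^-1) ^+ n <= \sum_(k < N) \prod_(i < n) (hi k i 0 - lo k i 0 + ((q*t)%:R)^-1).
Proof.
move=> q0 t0 lohi cov.
set M : R := (q*t)%:R.
have M0 : 0 < M by rewrite ltr0n muln_gt0 q0 t0.
have q0' : 0 < q%:R :> R by rewrite ltr0n.
have t0' : 0 < t%:R :> R by rewrite ltr0n.
pose F k i (m : 'I_t.+1) : R :=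
  ((M * (lo k i 0 - p i 0) <= m%:R) && (m%:R <= M * (hi k i 0 - p i 0)))%:R.
have F01 k i m : 0 <= F k i m <= 1.
  exact: b01.
have stepB (f : {ffun 'I_n -> 'I_t.+1}) : 1 <= \sum_(k < N) \prod_i F k i (f i).
  have /cov [k kN Hk] : forall i, p i 0 <= (\col_i (p i 0 + (f i)%:R / M) : 'cV[R]_n) i 0 <= p i 0 + q%:R^-1.
    move=> i; rewrite mxE. have fi : ((f i)%:R : R) <= t%:R by rewrite ler_nat -ltnS.
    have fi0 : 0 <= ((f i)%:R : R) by [].
    apply/andP; split.
      rewrite lerDl. by apply: divr_ge0.
    rewrite lerD2l /M natrM. rewrite ler_pdivrMr; last by rewrite mulr_gt0.
    rewrite mulrA mulVf ?mul1r //. by rewrite gt_eqF.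
  rewrite (bigD1 (Ordinal kN)) //=.
  have -> : \prod_i F k i (f i) = 1.
    apply: big1 => i _. rewrite /F.
    have := Hk i; rewrite mxE => /andP[h1 h2].
    have -> : (M * (lo k i 0 - p i 0) <= (f i)%:R) = true.
      apply/idP. rewrite -ler_pdivlMl // mulrC. lra.
    have -> : ((f i)%:R <= M * (hi k i 0 - p i 0)) = true.
      apply/idP. rewrite -ler_pdivrMl // mulrC. lra.
    by [].
  rewrite lerDl. apply: sumr_ge0 => j _. apply: prodr_ge0 => i _. by case/andP: (F01 j i (f i)).
have sum1 : \sum_(f : {ffun 'I_n -> 'I_t.+1}) (1 : R) = t.+1%:R ^+ n.
  by rewrite sumr_const card_ffun !card_ord natrX.
have H1 : t.+1%:R ^+ n <= \sum_(k < N) \prod_(i < n) (M * (hi k i 0 - lo k i 0) + 1).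
  rewrite -sum1.
  apply: le_trans (ler_sum _ (fun f _ => stepB f)) _.
  rewrite exchange_big /=. apply: ler_sum => k _.
  rewrite -(bigA_distr_bigA (F k)) /=.
  apply: ler_prod => i _. apply/andP; split.
    by apply: sumr_ge0 => m _; case/andP: (F01 k i m).
  have := @count1 R t.+1 (M * (lo k i 0 - p i 0)) (M * (hi k i 0 - p i 0)).
  move=> h. have := lohi k i => lh.
  have hh : M * (lo k i 0 - p i 0) <= M * (hi k i 0 - p i 0) + 1.
    have : M * (lo k i 0 - p i 0) <= M * (hi k i 0 - p i 0) by apply: ler_wpM2l; [lra|lra].
    lra.
  apply: le_trans (h hh) _. rewrite /F. lra.
have E : \sum_(k < N) \prod_(i < n) (M * (hi k i 0 - lo k i 0) + 1) =
    M ^+ n * \sum_(k < N) \prod_(i < n) (hi k i 0 - lo k i 0 + M^-1).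
  rewrite mulr_sumr; apply: eq_bigr => k _.
  have -> : M ^+ n = \prod_(i < n) M by rewrite prodr_const card_ord.
  rewrite -big_split /=.
  apply: eq_bigr => i _. rewrite [RHS]mulrDr mulfV //. by rewrite gt_eqF.
rewrite E in H1.
set X := \sum_(k < N) _ in H1 *.
have Mn0 : 0 < M ^+ n by apply: exprn_gt0.
have qe : q%:R^-1 = t%:R / M by rewrite /M natrM invfM mulrCA mulfV ?mulr1 // gt_eqF.
rewrite qe expr_div_n ler_pdivrMr //.
rewrite mulrC. apply: le_trans _ H1. apply: lerXn2r; rewrite ?nnegrE //.
by rewrite ler_nat.
Qed.
Lemma mxballP (R: realType) m n (x y : 'M[R]_(m,n)) e :
  ball x e y <-> 0 < e /\ forall i j, `|x i j - y i j| < e.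
Proof. rewrite mx_norm_ball /ball_ /=. have -> : `|x - y| = mx_norm (x - y) by [].
rewrite mx_normrE.
split.
- move=> /bigmax_ltP [e0 H]; split => // i j. have := H (i,j) isT. by rewrite !mxE.
- move=> [e0 H]; apply/bigmax_ltP; split => // -[i j] _. rewrite !mxE. exact: H.
Qed.
Lemma trmx_cont (R : realType) n : continuous (fun v : 'rV[R]_n => v^T).
Proof.
move=> v. apply/(@cvg_ballP _ _ _ _ (nbhs_filter v)) => e e0.
apply: filterS (nbhsx_ballx v e e0) => w /mxballP [_ H].
apply/mxballP; split => // i j. rewrite !mxE. exact: H.
Qed.
Lemma cube_compact (R : realType) n (p : 'cV[R]_n) (s : R) :
  compact [set y : 'cV[R]_n | forall i, p i 0 <= y i 0 <= p i 0 + s].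
Proof.
have := @rV_compact R n (fun i => `[p i 0, p i 0 + s]%classic) (fun i => @segment_compact R _ _).
move/(continuous_compact (continuous_subspaceT (@trmx_cont R n))).
congr compact. apply/seteqP; split.
- move=> _ [v Hv <-] i. rewrite mxE. have := Hv i. by rewrite /= in_itv /=.
- move=> y Hy. exists y^T; last by rewrite trmxK.
  move=> i /=. rewrite mxE in_itv /=. exact: Hy.
Qed.
Lemma finmin (R: realType) m (g : 'I_m -> R) : (forall i, 0 < g i) ->
  exists2 e, 0 < e & forall i, e <= g i.
Proof.
move=> g0. exists (1 + \sum_i (g i)^-1)^-1.
  rewrite invr_gt0. have : 0 <= \sum_i (g i)^-1 by apply: sumr_ge0 => i _; rewrite invr_ge0 ltW.
  lra.
move=> i. have gi := g0 i.
have h : (g i)^-1 <= 1 + \sum_i (g i)^-1.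
  rewrite (bigD1 i) //=. have : 0 <= \sum_(j | j != i) (g j)^-1.
    by apply: sumr_ge0 => j _; rewrite invr_ge0 ltW.
  lra.
rewrite -[X in _ <= X]invrK lef_pV2 //; rewrite posrE ?invr_gt0 //.
have : 0 <= \sum_i (g i)^-1 by apply: sumr_ge0 => j _; rewrite invr_ge0 ltW.
lra.
Qed.
Lemma open_box (R: realType) n (lo hi : 'I_n -> R) :
  open [set y : 'cV[R]_n | forall i, lo i < y i 0 < hi i].
Proof.
rewrite openE => y Hy. rewrite /interior. apply/nbhs_ballP.
have gpos : forall i, 0 < Num.min (y i 0 - lo i) (hi i - y i 0).
  move=> i /=. have := Hy i. rewrite lt_min. move=> /andP[h1 h2]. apply/andP; split; lra.
have [e e0 He] := @finmin R n _ gpos.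
exists e => // w /mxballP [_ Hw] i.
have := Hw i 0. have := He i. rewrite /= le_min => /andP[h1 h2].
rewrite ltr_norml => /andP[h3 h4]. apply/andP; split; lra.
Qed.
Lemma prod_linI (R : realType) m (G : 'I_m -> R) r : (forall i, 0 <= G i) -> 0 <= r <= 1 ->
  \prod_(i < m) (G i + r) <= \prod_(i < m) G i + r * (m%:R * \prod_(i < m) (G i + 1)).
Proof.
case: m G => [|m] G G0 r01.
  by rewrite !big_ord0 mul0r mulr0 addr0.
pose L (j : nat) := G (inord j).
have := @prod_lin R m.+1 L r (fun j => G0 _) r01.
by rewrite /L; under eq_bigr do rewrite inord_val; under [X in _ <= X + _]eq_bigr do rewrite inord_val;
   under [X in _ <= _ + _ * (_ * X)]eq_bigr do rewrite inord_val.
Qed.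
Lemma not_null (R : realType) n (S : set 'cV[R]_n) (y0 : 'cV[R]_n) (rho : R) :
  0 < rho -> lebesgue_null S -> exists y, ball y0 rho y /\ ~ S y.
Proof.
move=> rho0 nullS.
apply: contrapT => nex.
have sub : forall y, ball y0 rho y -> S y.
  move=> y By; apply: contrapT => nS; apply: nex; by exists y.
pose q := (Num.trunc (rho^-1)).+1.
have q0 : (0 < q)%N by [].
have q0' : 0 < q%:R :> R by rewrite ltr0n.
set s : R := q%:R^-1.
have s0 : 0 < s by rewrite invr_gt0.
have srho : s < rho.
  rewrite /s -[rho]invrK ltf_pV2 ?posrE ?invr_gt0 //. exact: truncnS_gt.
pose p : 'cV[R]_n := \col_i (y0 i 0 - s / 2).
pose Q := [set y : 'cV[R]_n | forall i, p i 0 <= y i 0 <= p i 0 + s].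
have QS : Q `<=` S.
  move=> y Hy; apply: sub; apply/mxballP; split => // i j.
  rewrite ord1. have := Hy i. rewrite /p mxE => /andP[h1 h2].
  rewrite ltr_norml; apply/andP; split; lra.
set vol := s ^+ n.
have vol0 : 0 < vol by apply: exprn_gt0.
set eps := vol / 4.
have eps0 : 0 < eps by apply: divr_gt0.
have [a [b [ab [cov sm]]]] := nullS eps eps0.
pose L k i := b k i 0 - a k i 0.
have L0 k i : 0 <= L k i by rewrite /L subr_ge0.
pose C k := n%:R * \prod_(i < n) (L k i + 1).
have C0 k : 0 <= C k by apply: mulr_ge0 => //; apply: prodr_ge0 => i _; have := L0 k i; lra.
pose et k : R := eps * (2^-1) ^+ k.+1.
have et0 k : 0 < et k by apply: mulr_gt0 => //; apply: exprn_gt0; rewrite invr_gt0.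
pose rh k := Num.min 1 (et k / (C k + 1)).
have rh0 k : 0 < rh k.
  rewrite lt_min ltr01 /=. apply: divr_gt0 => //. have := C0 k; lra.
have rh1 k : rh k <= 1 by rewrite ge_min lexx.
have rhC k : rh k * C k <= et k.
  have h : rh k <= et k / (C k + 1) by rewrite ge_min lexx orbT.
  have Ck := C0 k. have Ck1 : 0 < C k + 1 by lra.
  apply: le_trans (_ : et k / (C k + 1) * C k <= _).
    by apply: ler_wpM2r.
  rewrite mulrAC ler_pdivrMr //. have := et0 k. nra.
have prodrh k : \prod_(i < n) (L k i + rh k) <= \prod_(i < n) L k i + et k.
  have := @prod_linI R n (L k) (rh k) (L0 k) _.
  rewrite (ltW (rh0 k)) rh1 => /(_ isT) h. apply: le_trans h _.
  rewrite lerD2l. exact: rhC.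
pose O k := [set y : 'cV[R]_n | forall i, a k i 0 - rh k / 2 < y i 0 < b k i 0 + rh k / 2].
have Oopen k : open (O k) by apply: (@open_box R n (fun i => a k i 0 - rh k / 2) (fun i => b k i 0 + rh k / 2)).
have QO : Q `<=` cover setT O.
  move=> y /QS /cov [k _ Hk]. exists k => // i. have := Hk i. have := rh0 k.
  move=> h /andP[h1 h2]. apply/andP; split; lra.
have := @cube_compact R n p s. rewrite compact_cover => /(_ nat setT O (fun k _ => Oopen k) QO).
move=> [D' _ QD'].
pose N := (\max_(k <- finmap.enum_fset D') k).+1.
pose lo k : 'cV[R]_n := \col_i (a k i 0 - rh k / 2).
pose hi k : 'cV[R]_n := \col_i (b k i 0 + rh k / 2).
have lohi k i : lo k i 0 <= hi k i 0.
  rewrite !mxE. have := ab k i. have := rh0 k. lra.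
have lat t : (0 < t)%N ->
    vol <= \sum_(k < N) \prod_(i < n) (hi k i 0 - lo k i 0 + ((q*t)%:R)^-1).
  move=> t0. apply: (@lattice R n p q t N lo hi q0 t0 lohi) => y Hy.
  have /QD' [k kD Ok] : Q y by [].
  exists k.
    rewrite ltnS. apply: (@leq_bigmax_seq _ _ xpredT id k) => //.
  move=> i. rewrite !mxE. have := Ok i => /andP[h1 h2]. apply/andP; split; lra.
pose Cp k := n%:R * \prod_(i < n) (L k i + rh k + 1).
have Cp0 k : 0 <= Cp k.
  apply: mulr_ge0 => //; apply: prodr_ge0 => i _; have := L0 k i; have := rh0 k; lra.
pose Csum := \sum_(k < N) Cp k.
have Csum0 : 0 <= Csum by apply: sumr_ge0 => k _.
pose t := (Num.trunc (Csum / eps)).+1.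
have t0 : (0 < t)%N by [].
have tgt : Csum / eps < t%:R by apply: truncnS_gt.
have t0' : 0 < t%:R :> R by rewrite ltr0n.
set r : R := ((q * t)%:R)^-1.
have r0 : 0 < r by rewrite invr_gt0 ltr0n muln_gt0 q0 t0.
have rt : r <= t%:R^-1.
  rewrite /r natrM invfM. rewrite -[X in _ <= X]mul1r. apply: ler_wpM2r; first by rewrite invr_ge0 ltW.
  rewrite invr_le1 ?unitfE ?gt_eqF // ler1n; exact: q0.
have r1 : r <= 1.
  apply: le_trans rt _. rewrite invr_le1 ?unitfE ?gt_eqF // ler1n; exact: t0.
have rC : r * Csum < eps.
  apply: le_lt_trans (_ : t%:R^-1 * Csum < eps).
    by apply: ler_wpM2r.
  rewrite mulrC ltr_pdivrMr // mulrC -ltr_pdivrMr //.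
have H := lat t t0. rewrite -/r in H.
have H2 : \sum_(k < N) \prod_(i < n) (hi k i 0 - lo k i 0 + r) <=
    \sum_(k < N) (\prod_(i < n) L k i + et k) + r * Csum.
  rewrite /Csum mulr_sumr -big_split /=. apply: ler_sum => k _.
  have -> : \prod_(i < n) (hi k i 0 - lo k i 0 + r) = \prod_(i < n) ((L k i + rh k) + r).
    apply: eq_bigr => i _. rewrite !mxE /L. lra.
  apply: le_trans (@prod_linI R n (fun i => L k i + rh k) r _ _) _.
  - move=> i; have := L0 k i; have := rh0 k; lra.
  - by rewrite (ltW r0) r1.
  apply: lerD; first exact: prodrh.
  by rewrite lexx.
have H3 : \sum_(k < N) (\prod_(i < n) L k i + et k) <= eps + eps.
  rewrite big_split /=. apply: lerD; first exact: sm.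
  rewrite /et -mulr_sumr geo. have : 0 <= (2:R)^-1 ^+ N by apply: exprn_ge0; rewrite invr_ge0.
  move=> h. rewrite -[X in _ <= X]mulr1. apply: ler_wpM2l; [exact: ltW|lra].
have : vol < 3 * eps by lra.
rewrite /eps. lra.
Qed.
Lemma Dx_entry (R : realType) n (d : 'I_n -> R) (x : 'cV[R]_n) i :
  (Dmat d *m x) i 0 = d i * x i 0.
Proof. by rewrite /Dmat mul_diag_mx !mxE. Qed.

Lemma part1 (R : realType) n (d : 'I_n -> R) (A : 'M[R]_n) (u : 'cV[R]_n) x :
  Xdom d x -> Ftau d A u tau x @[tau --> +oo] --> Finf d A u x.
Proof.
move=> Xx. apply: cvg_near_cst.
pose sv i := \sum_(j < n) A i j * x j 0 + u i 0.
pose T := \sum_i 2 / `|sv i|.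
exists T; split; first by rewrite num_real.
move=> tau HT. apply/matrixP => i j. rewrite ord1 !mxE /= -/(sv i).
have -> : \sum_(j0 < n) Dmat d i j0 * x j0 0 = d i * x i 0 by rewrite -Dx_entry mxE.
have T0 : 0 <= T by apply: sumr_ge0 => k _; apply: divr_ge0.
have Ti : 2 / `|sv i| <= T.
  rewrite /T (bigD1 i) //= lerDl. by apply: sumr_ge0 => k _; apply: divr_ge0.
set dx := d i * x i 0.
have := Xx i. rewrite Dx_entry -/dx => /andP[dx0 dx1].
have tau0 : 0 < tau by lra.
case: (ltrgt0P (sv i)) => hs.
-
  have ts : 2 <= tau * sv i.
    have : 2 / `|sv i| <= tau by lra.
    rewrite ler_pdivrMr ?normr_gt0 ?gt_eqF // gtr0_norm //.
  have h1 : Num.min (dx + tau * sv i) 1 = 1 by apply/min_idPr; lra.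
  rewrite h1. have -> : Num.max 0 1 = 1 :> R by apply/max_idPr; rewrite ler01.
  by rewrite addrC.
- have ts : 2 <= tau * - sv i.
    have : 2 / `|sv i| <= tau by lra.
    rewrite ler_pdivrMr ?normr_gt0 ?lt_eqF // ltr0_norm //.
  have h1 : Num.min (dx + tau * sv i) 1 = dx + tau * sv i by apply/min_idPl; lra.
  rewrite h1. have -> : Num.max 0 (dx + tau * sv i) = 0 by apply/max_idPl; lra.
  by rewrite addr0.
- rewrite hs mulr0 addr0.
  have -> : Num.min dx 1 = dx by apply/min_idPl.
  have -> : Num.max 0 dx = dx by apply/max_idPr.
  by rewrite addNr.
Qed.
Lemma eball_coord (R : realType) n (x y : 'cV[R]_n) delta :
  eball x delta y -> 0 < delta -> forall j, `|y j 0 - x j 0| < delta.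
Proof.
rewrite /eball /= => H d0 j.
have h : (y j 0 - x j 0) ^+ 2 <= \sum_(i < n) (y i 0 - x i 0) ^+ 2.
  rewrite (bigD1 j) //= lerDl. by apply: sumr_ge0 => i _; apply: sqr_ge0.
have : `|y j 0 - x j 0| ^+ 2 < delta ^+ 2 by rewrite real_normK ?num_real //; lra.
rewrite ltr_pXn2r // ?nnegrE //. exact: ltW.
Qed.

Lemma mulmx_bound (R : realType) n (A : 'M[R]_n) (v : 'cV[R]_n) e i :
  (forall j, `|v j 0| <= e) -> `|(A *m v) i 0| <= (\sum_j `|A i j|) * e.
Proof.
move=> H. rewrite mxE. apply: le_trans (ler_norm_sum _ _ _) _.
rewrite mulr_suml. apply: ler_sum => j _. rewrite normrM. apply: ler_wpM2l => //.
Qed.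

Lemma Finf_entry (R : realType) n (d : 'I_n -> R) (A : 'M[R]_n) (u y : 'cV[R]_n) i :
  (Finf d A u y) i 0 = if (A *m y + u) i 0 < 0 then - (d i * y i 0)
     else if (A *m y + u) i 0 == 0 then 0 else 1 - d i * y i 0.
Proof. by rewrite /Finf [in LHS]mxE. Qed.

Lemma conv_coord (R : realType) n (P : set 'cV[R]_n) i (lo hi : R) c :
  (forall p, P p -> lo <= p i 0 <= hi) -> conv_hull P c -> lo <= c i 0 <= hi.
Proof.
move=> HP [k [w [p [w0 [w1 [Pp ->]]]]]].
rewrite summxE.
have -> : \sum_(j < k) (w j *: p j) i 0 = \sum_(j < k) w j * p j i 0.
  by apply: eq_bigr => j _; rewrite mxE.
apply/andP; split.
- rewrite -[lo]mul1r -w1 mulr_suml. apply: ler_sum => j _. apply: ler_wpM2l => //.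
  by case/andP: (HP _ (Pp j)).
- rewrite -[hi]mul1r -w1 mulr_suml. apply: ler_sum => j _. apply: ler_wpM2l => //.
  by case/andP: (HP _ (Pp j)).
Qed.
Lemma sub_dir (R : realType) n (d : 'I_n -> R) (A : 'M[R]_n) (u x z : 'cV[R]_n) :
  Xdom d x -> (forall delta, 0 < delta -> cl_conv_hull (Finf d A u @` eball x delta) z) ->
  Hset (A *m x + u) (z + Dmat d *m x).
Proof.
move=> Xx Hz i.
set s := (A *m x + u) i 0.
pose lo : R := if 0 < s then 1 else 0.
pose hi : R := if s < 0 then 0 else 1.
have dx := Xx i. rewrite Dx_entry in dx. case/andP: dx => dx0 dx1.
suff key : forall e, 0 < e -> lo - e <= z i 0 + d i * x i 0 <= hi + e.
  have Hlo : lo <= z i 0 + d i * x i 0.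
    apply/ler_addgt0Pr => e e0. have := key e e0. lra.
  have Hhi : z i 0 + d i * x i 0 <= hi.
    apply/ler_addgt0Pr => e e0. have := key e e0. lra.
  rewrite mxE Dx_entry. move: Hlo Hhi; rewrite /lo /hi.
  split; [move=> sn|split=> [s0|sp]].
  - move: Hlo Hhi. rewrite sn ltNge (ltW sn) /=. lra.
  - move: Hlo Hhi. rewrite s0 ltxx /=. lra.
  - move: Hlo Hhi. rewrite sp ltNge (ltW sp) /=. lra.
move=> e e0.
set Ri := \sum_j `|A i j|.
have Ri0 : 0 <= Ri by apply: sumr_ge0 => j _.
set K := 1 + Ri + `|d i|.
have K0 : 0 < K by rewrite /K; have := normr_ge0 (d i); lra.
pose e' := if s == 0 then e / 2 else Num.min (e / 2) `|s|.
have e'0 : 0 < e'.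
  rewrite /e'; case: eqP => [_|/eqP sn]; first by lra.
  by rewrite lt_min normr_gt0 sn andbT; lra.
have e'e : e' <= e / 2 by rewrite /e'; case: eqP => _; rewrite ?lexx ?ge_min ?lexx.
have e's : s != 0 -> e' <= `|s|.
  by move=> sn; rewrite /e' (negbTE sn) ge_min lexx orbT.
pose delta := e' / K.
have delta0 : 0 < delta by apply: divr_gt0.
have Kdelta : K * delta = e' by rewrite /delta mulrC divfK // gt_eqF.
have pts : forall p, (Finf d A u @` eball x delta) p ->
    lo - e / 2 - d i * x i 0 <= p i 0 <= hi + e / 2 - d i * x i 0.
  move=> _ [w Bw <-].
  have cw := @eball_coord R n x w delta Bw delta0.
  have hA : `|(A *m w + u) i 0 - s| <= Ri * delta.
    have -> : (A *m w + u) i 0 - s = (A *m (w - x)) i 0.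
      by rewrite /s mulmxBr !mxE; lra.
    apply: mulmx_bound => j. rewrite !mxE. exact: ltW.
  have hd : `|d i * w i 0 - d i * x i 0| <= `|d i| * delta.
    rewrite -mulrBr normrM. apply: ler_wpM2l => //. exact: ltW.
  have hRi : Ri * delta < e'.
    rewrite -Kdelta ltr_pM2r // /K. have := normr_ge0 (d i). lra.
  have hdi : `|d i| * delta < e / 2.
    apply: lt_le_trans e'e. rewrite -Kdelta ltr_pM2r // /K. lra.
  move: hA hd. rewrite !ler_norml => /andP[a1 a2] /andP[b1 b2].
  rewrite Finf_entry /lo /hi.
  case: (ltrgt0P s) => hs.
  - have : 0 < (A *m w + u) i 0.
      have := e's (lt0r_neq0 hs). rewrite gtr0_norm //. lra.
    move=> hw. rewrite ltNge (ltW hw) /= gt_eqF //. lra.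
  - have : (A *m w + u) i 0 < 0.
      have := e's (ltr0_neq0 hs). rewrite ltr0_norm //. lra.
    move=> hw. rewrite hw. lra.
  - case: ifP => _; first lra. case: ifP => _; lra.
have := Hz delta delta0.
move=> cl. have [c [Cc Bc]] := cl _ (nbhsx_ballx z (e/2) ltac:(lra)).
have := @conv_coord R n _ i _ _ c pts Cc. move: Bc => /mxballP [_ /(_ i 0)].
rewrite ltr_norml => /andP[h1 h2] h3. lra.
Qed.
Lemma wsum1 (R : realType) n (t : 'I_n -> R) :
  \sum_(f : {ffun 'I_n -> bool}) \prod_i (if f i then t i else 1 - t i) = 1.
Proof.
rewrite -(bigA_distr_bigA (fun i (b : bool) => if b then t i else 1 - t i)) /=.
apply: big1 => i _. rewrite big_bool /=. lra.
Qed.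

Lemma wsumi (R : realType) n (t : 'I_n -> R) i :
  \sum_(f : {ffun 'I_n -> bool}) (\prod_j (if f j then t j else 1 - t j)) * (f i)%:R = t i.
Proof.
have E : forall f : {ffun 'I_n -> bool},
   (\prod_j (if f j then t j else 1 - t j)) * (f i)%:R =
   \prod_j ((if f j then t j else 1 - t j) * (if j == i then (f j)%:R else 1)).
  move=> f. rewrite big_split /=. congr (_ * _).
  rewrite (bigD1 i) //= eqxx big1 ?mulr1 // => j /negbTE ->. by [].
rewrite (eq_bigr _ (fun f _ => E f)).
rewrite -(bigA_distr_bigA (fun j (b : bool) => (if b then t j else 1 - t j) * (if j == i then b%:R else 1))) /=.
rewrite (bigD1 i) //= [X in _ * X]big1 ?mulr1.
  by rewrite big_bool /= eqxx mulr1 mulr0 addr0.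
move=> j /negbTE ji. rewrite big_bool /= ji !mulr1. lra.
Qed.

Lemma sum_enum (V : nmodType) (T : finType) (F : T -> V) :
  \sum_(j : T) F j = \sum_(k < #|T|) F (enum_val k).
Proof. rewrite -big_enum_val. by apply: eq_bigl => x. Qed.

Lemma conv_fin (R : realType) n (T : finType) (P : set 'cV[R]_n) (w : T -> R) (p : T -> 'cV[R]_n) :
  (forall j, 0 <= w j) -> \sum_j w j = 1 -> (forall j, P (p j)) ->
  conv_hull P (\sum_j w j *: p j).
Proof.
move=> w0 w1 Pp. exists #|T|, (fun k => w (enum_val k)), (fun k => p (enum_val k)).
split; first by move=> k.
split; first by rewrite -w1 (@sum_enum _ _ w).
split; first by move=> k.
by rewrite (@sum_enum _ _ (fun j => w j *: p j)).
Qed.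
Lemma row_le (R : realType) n (A : 'M[R]_n) i :
  \sum_j `|A i j| <= 1 + \sum_k \sum_j `|A k j|.
Proof.
rewrite [X in _ <= 1 + X](bigD1 i) //=. have : 0 <= \sum_(k | k != i) \sum_j `|A k j|.
  by apply: sumr_ge0 => k _; apply: sumr_ge0.
lra.
Qed.

Lemma sup_dir (R : realType) n (d : 'I_n -> R) (A : 'M[R]_n) (u x t : 'cV[R]_n) :
  A \in unitmx -> Hset (A *m x + u) t ->
  forall delta, 0 < delta -> forall S, lebesgue_null S ->
  cl_conv_hull (Finf d A u @` (eball x delta `\` S)) (- (Dmat d *m x) + t).
Proof.
move=> Au Ht delta delta0 S nS.
set z := - (Dmat d *m x) + t.
move=> B /nbhs_ballP [e e0 Be].
set s := A *m x + u.
have gpos : forall i, 0 < (if s i 0 == 0 then 1 else `|s i 0|).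
  by move=> i; case: eqP => [_|/eqP h]; rewrite ?ltr01 ?normr_gt0.
have [mm mm0 Hmm] := @finmin R n _ gpos.
have Hmm' : forall i, s i 0 != 0 -> mm <= `|s i 0|.
  by move=> i /negbTE h; have := Hmm i; rewrite h.
set CA := 1 + \sum_k \sum_j `|A k j|.
have CA0 : 1 <= CA by rewrite /CA lerDl; apply: sumr_ge0 => k _; apply: sumr_ge0.
set Ai := invmx A.
set CB := 1 + \sum_k \sum_j `|Ai k j|.
have CB0 : 1 <= CB by rewrite /CB lerDl; apply: sumr_ge0 => k _; apply: sumr_ge0.
set Ds := 1 + \sum_k `|d k|.
have Ds0 : 1 <= Ds by rewrite /Ds lerDl; apply: sumr_ge0 => k _.
have dDs : forall i, `|d i| < Ds.
  move=> i. rewrite /Ds (bigD1 i) //=. have : 0 <= \sum_(k | k != i) `|d k| by apply: sumr_ge0.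
  lra.
set r := Num.min (delta / (n%:R + 1)) (e / Ds).
have n10 : 0 < n%:R + 1 :> R by have : 0 <= n%:R :> R by []; lra.
have r0 : 0 < r by rewrite lt_min !divr_gt0 //; lra.
have rdelta : r * (n%:R + 1) <= delta.
  rewrite -ler_pdivlMr //. by rewrite ge_min lexx.
have re : r * Ds <= e.
  rewrite -ler_pdivlMr; last lra. by rewrite ge_min lexx orbT.
set kap := Num.min (mm / 2) (r / (2 * CB)).
have kap0 : 0 < kap by rewrite lt_min !divr_gt0 //; lra.
have kapm : kap <= mm / 2 by rewrite ge_min lexx.
have kapr : kap * CB <= r / 2.
  have : kap <= r / (2 * CB) by rewrite ge_min lexx orbT.
  rewrite ler_pdivlMr; last lra. lra.
set rho := Num.min (kap / (2 * CA)) (r / 2).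
have rho0 : 0 < rho by rewrite lt_min !divr_gt0 //; lra.
have rhok : rho * CA <= kap / 2.
  have : rho <= kap / (2 * CA) by rewrite ge_min lexx.
  rewrite ler_pdivlMr; last lra. lra.
have rhor : rho <= r / 2 by rewrite ge_min lexx orbT.
pose sig (f : {ffun 'I_n -> bool}) : 'cV[R]_n := \col_i (if f i then 1 else -1).
pose y0 f := x + Ai *m (kap *: sig f).
have exy : forall f : {ffun 'I_n -> bool}, exists y, ball (y0 f) rho y /\ ~ S y.
  move=> f. exact: (@not_null R n S (y0 f) rho rho0 nS).
have [yf Hyf] := choice exy.
have P0 f j : `|y0 f j 0 - yf f j 0| < rho.
  by have [/mxballP [_ H] _] := Hyf f; exact: H.
have Psig f j : `|(kap *: sig f) j 0| <= kap.
  rewrite !mxE. case: (f j); rewrite ?mulr1 ?mulrN1 ?normrN gtr0_norm //.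
have P1 f j : `|yf f j 0 - x j 0| < r.
  have h1 := @mulmx_bound R n Ai (kap *: sig f) kap j (Psig f).
  have h2 : (\sum_k `|Ai j k|) * kap <= CB * kap.
    apply: ler_wpM2r; [exact: ltW | exact: row_le].
  move: h1 h2. set a := (Ai *m (kap *: sig f)) j 0. set b := \sum_k _.
  have ea : y0 f j 0 = x j 0 + a by rewrite /y0 [LHS]mxE.
  have := P0 f j. rewrite ea.
  rewrite !ler_norml ltr_norml => /andP[c1 c2] /andP[a1 a2] h2.
  rewrite ltr_norml. apply/andP; split; lra.
have P2 f i : (A *m yf f + u) i 0 = s i 0 + kap * (if f i then 1 else -1) + (A *m (yf f - y0 f)) i 0.
  have M : A *m (yf f - y0 f) = A *m yf f - A *m x - kap *: sig f.
    by rewrite /y0 mulmxBr mulmxDr mulmxA mulmxV // mul1mx opprD addrA.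
  rewrite M /s !mxE. set k1 := kap * _. set q1 := \sum_j A i j * yf f j 0. set q2 := \sum_j A i j * x j 0. lra.
have P3 f i : `|(A *m (yf f - y0 f)) i 0| <= kap / 2.
  apply: le_trans (@mulmx_bound R n A (yf f - y0 f) rho i _) _.
    move=> j. have e2 : (yf f - y0 f) j 0 = yf f j 0 - y0 f j 0 by rewrite !mxE.
    rewrite e2 distrC. exact: ltW (P0 f j).
  apply: le_trans rhok. rewrite mulrC. apply: ler_wpM2l; [exact: ltW | exact: row_le].
pose g (f : {ffun 'I_n -> bool}) i : R := if s i 0 == 0 then (f i)%:R else if 0 < s i 0 then 1 else 0.
have P4 f i : (Finf d A u (yf f)) i 0 = - (d i * yf f i 0) + g f i.
  rewrite Finf_entry P2 /g.
  have := P3 f i. rewrite ler_norml => /andP[w1 w2].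
  set w := (A *m (yf f - y0 f)) i 0 in w1 w2 *.
  case: (ltrgt0P (s i 0)) => hs.
  - have := Hmm' i (lt0r_neq0 hs). rewrite gtr0_norm // => hm.
    have hv : 0 < s i 0 + kap * (if f i then 1 else -1) + w.
      case: (f i); lra.
    rewrite ltNge (ltW hv) /= gt_eqF //. lra.
  - have := Hmm' i (ltr0_neq0 hs). rewrite ltr0_norm // => hm.
    have hv : s i 0 + kap * (if f i then 1 else -1) + w < 0.
      case: (f i); lra.
    rewrite hv /=. lra.
  - rewrite hs add0r. case: (f i) => /=.
    + have hv : 0 < kap * 1 + w by lra.
      rewrite ltNge (ltW hv) /= gt_eqF //. lra.
    + have hv : kap * -1 + w < 0 by lra.
      rewrite hv /=. lra.
have P5 f : eball x delta (yf f).
  rewrite /eball /=.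
  apply: le_lt_trans (_ : \sum_(j < n) r ^+ 2 < _).
    apply: ler_sum => j _. have := P1 f j. rewrite ltr_norml => /andP[h1 h2]. nra.
  rewrite sumr_const card_ord -mulr_natl.
  have h : r * (n%:R + 1) <= delta := rdelta.
  have nn : 0 <= n%:R :> R by [].
  have h2 : (r * (n%:R + 1)) ^+ 2 <= delta ^+ 2.
    rewrite ler_pXn2r // ?nnegrE; [nra | lra].
  have h3 : n%:R * r ^+ 2 < (r * (n%:R + 1)) ^+ 2.
    have r2 : 0 < r ^+ 2 by apply: exprn_gt0.
    rewrite exprMn. have : n%:R < (n%:R + 1) ^+ 2 :> R by rewrite sqrrD1; nra.
    move=> hh. rewrite mulrC. by rewrite ltr_pM2l.
  lra.
pose tt i := t i 0.
have t01 i : 0 <= tt i <= 1.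
  have [h1 [h2 h3]] := Ht i. rewrite /tt.
  case: (ltrgt0P ((A *m x + u) i 0)) => hs.
  - by rewrite h3 // ler01 lexx.
  - by rewrite h1 // lexx ler01.
  - exact: h2.
pose W (f : {ffun 'I_n -> bool}) := \prod_i (if f i then tt i else 1 - tt i).
have W0 f : 0 <= W f.
  apply: prodr_ge0 => i _. have := t01 i. case: (f i); lra.
have gsum i : \sum_f W f * g f i = tt i.
  rewrite /g. case: eqP => [_|/eqP sn]; first exact: wsumi.
  rewrite -mulr_suml wsum1 mul1r.
  have [h1 [h2 h3]] := Ht i. rewrite /tt.
  case: (ltrgt0P (s i 0)) => hs.
  - by rewrite h3.
  - by rewrite h1.
  - by move: sn; rewrite hs eqxx.
pose c := \sum_f W f *: Finf d A u (yf f).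
exists c; split.
  apply: conv_fin => //; first exact: wsum1.
  move=> f. exists (yf f) => //. split; first exact: P5.
  by have [_ ?] := Hyf f.
apply: Be. apply/mxballP; split => // i j. rewrite ord1.
have ez : z i 0 = - (d i * x i 0) + t i 0.
  rewrite -Dx_entry /z. by rewrite !mxE.
have ec : c i 0 = \sum_f W f * (Finf d A u (yf f)) i 0.
  rewrite /c summxE. apply: eq_bigr => f _. by rewrite [in LHS]mxE.
have ec2 : c i 0 = \sum_f W f * (- (d i * yf f i 0)) + tt i.
  rewrite ec -(gsum i) -big_split /=. apply: eq_bigr => f _. by rewrite P4 mulrDr.
have ex : d i * x i 0 = \sum_f W f * (d i * x i 0) by rewrite -mulr_suml wsum1 mul1r.
have eS2 : \sum_f W f * (d i * (yf f i 0 - x i 0)) =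
    - (\sum_f W f * (- (d i * yf f i 0))) - \sum_f W f * (d i * x i 0).
  rewrite -sumrN -sumrB. apply: eq_bigr => f _. ring.
have -> : z i 0 - c i 0 = \sum_f W f * (d i * (yf f i 0 - x i 0)).
  rewrite eS2 ez ec2 -ex /tt. set P := \sum_f _. lra.
apply: le_lt_trans (ler_norm_sum _ _ _) _.
apply: le_lt_trans (_ : \sum_f W f * (`|d i| * r) < _).
  apply: ler_sum => f _. rewrite normrM (ger0_norm (W0 f)). apply: ler_wpM2l => //.
  rewrite normrM. apply: ler_wpM2l => //. exact: ltW (P1 f i).
rewrite -mulr_suml wsum1 mul1r.
have := dDs i. have : 0 <= `|d i| by []. nra.
Qed.
Lemma null0 (R : realType) n : (0 < n)%N -> lebesgue_null (set0 : set 'cV[R]_n).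
Proof.
move=> npos eps e0. exists (fun _ => 0), (fun _ => 0). split; first by move=> k i; rewrite lexx.
split; first by [].
move=> N. rewrite big1 ?ltW // => k _.
by rewrite (bigD1 (Ordinal npos)) //= !mxE subrr mul0r.
Qed.

Theorem proposition5 (R : realType) (n : nat) (d : 'I_n -> R)
  (W : 'M[R]_n) (u : 'cV[R]_n) :
  (forall i, 0 < d i) ->
  (forall x, Xdom d x ->
     Ftau d (W - Dmat d) u tau x @[tau --> +oo] --> Finf d (W - Dmat d) u x) /\
  (\det (W - Dmat d) != 0 ->
     forall x, Xdom d x ->
       filippov (Finf d (W - Dmat d) u) x =
       (fun y => - (Dmat d *m x) + y) @` Hset ((W - Dmat d) *m x + u)).
Proof.
move=> dpos; split.
  move=> x Xx. exact: part1.
move=> det x Xx.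
have Au : (W - Dmat d) \in unitmx by rewrite unitmxE unitfE.
apply/seteqP; split.
- move=> z Hz. exists (z + Dmat d *m x); last by rewrite (addrC z) addKr.
  have [n0|npos] := posnP n.
    move=> i. exfalso. have := ltn_ord i. by rewrite {2}n0.
  apply: (@sub_dir R n d (W - Dmat d) u x z Xx) => delta d0.
  have := Hz delta d0 set0 (@null0 R n npos). by rewrite setD0.
- move=> _ [y Hy <-] delta d0 S nS. exact: sup_dir.
Qed.
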